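(* Suppose Assumptions (A1) and (A2) below hold, and let $\{\boldsymbol{x}_{i,t}\}$ be the decision sequence generated by Algorithm DOMFW (described in the context) with parameters $0<\alpha_t\le 1$ and a nondecreasing integer sequence $\{K_t\}$. Then for any $T\ge 2$ and $K_t\ge 2$ (for all $t$), $$\sum_{t=1}^T\sum_{i=1}^n \|\boldsymbol{x}_{i,t}-\boldsymbol{x}_{avg,t}\| \le \frac{n\Gamma_1}{1-\sigma_1^{K_1}}\sum_{i=1}^n\|\boldsymbol{x}_{i,1}\| + \sum_{i=1}^n\|\boldsymbol{x}_{i,1}-\boldsymbol{x}_{avg,1}\| + \left(\frac{n^2M\Gamma_1}{\sigma_1(1-\sigma_1)(1-\sigma_1^{K_1})}+2nM\right)\sum_{t=1}^T\alpha_t .$$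
   Context: Network: $n$ agents, $\mathcal{V}=\{1,\dots,n\}$, time-varying directed graphs $\mathcal{G}_t=(\mathcal{V},\mathcal{E}_t,A_t)$ with weight matrices $A_t\in\mathbb{R}^{n\times n}$; $\mathcal{N}_i^{in}(t)=\{j:(j,i)\in\mathcal{E}_t\}\cup\{i\}$, and $[A_t]_{ij}>0$ if $j\in\mathcal{N}_i^{in}(t)$, $[A_t]_{ij}=0$ otherwise. Assumption (A1): (a) there is $\zeta>0$ with $[A_t]_{ij}>\zeta$ whenever $[A_t]_{ij}>0$; (b) $\mathcal{G}_t$ is strongly connected for all $t$; (c) each $A_t$ is doubly stochastic. Assumption (A2): $\boldsymbol{X}\subset\mathbb{R}^d$ is convex compact with $\|\boldsymbol{x}-\boldsymbol{z}\|\le M$ for all $\boldsymbol{x},\boldsymbol{z}\in\boldsymbol{X}$. Each agent $i$ has at round $t$ a convex differentiable loss $f_{i,t}$ on $\boldsymbol{X}$. Algorithm DOMFW: initial points $\boldsymbol{x}_{i,1}\in\boldsymbol{X}$. For $t=1,\dots,T$: set $\boldsymbol{x}_{i,t}^1=\boldsymbol{x}_{i,t}$; for $k=1,\dots,K_t$, each agent $i$ computes $\hat{\boldsymbol{x}}_{i,t}^k=\sum_{j}[A_t]_{ij}\boldsymbol{x}_{j,t}^k$; $\overline{\nabla}f_{i,t}^1=\nabla f_{i,t}(\hat{\boldsymbol{x}}_{i,t}^1)$ and for $k\ge2$, $\overline{\nabla}f_{i,t}^k=\widehat{\nabla}f_{i,t}^{k-1}+\nabla f_{i,t}(\hat{\boldsymbol{x}}_{i,t}^k)-\nabla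 f_{i,t}(\hat{\boldsymbol{x}}_{i,t}^{k-1})$; $\widehat{\nabla}f_{i,t}^k=\sum_j[A_t]_{ij}\overline{\nabla}f_{j,t}^k$; $\boldsymbol{v}_{i,t}^k\in\arg\min_{\boldsymbol{x}\in\boldsymbol{X}}\langle\boldsymbol{x},\widehat{\nabla}f_{i,t}^k\rangle$; $\boldsymbol{x}_{i,t}^{k+1}=\hat{\boldsymbol{x}}_{i,t}^k+\alpha_t(\boldsymbol{v}_{i,t}^k-\hat{\boldsymbol{x}}_{i,t}^k)$. Then $\boldsymbol{x}_{i,t+1}=\boldsymbol{x}_{i,t}^{K_t+1}$. Notation: $\boldsymbol{x}_{avg,t}=\frac1n\sum_i\boldsymbol{x}_{i,t}$; $\sigma_1=1-\frac{\zeta}{4n^2}$, $\Gamma_1=\left(1-\frac{\zeta}{4n^2}\right)^{-1}$. *)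

(* Defs.v *)
From HB Require Import structures.
From mathcomp Require Import all_boot all_order all_algebra.
From mathcomp Require Import all_classical all_reals all_analysis.
Set Implicit Arguments. Unset Strict Implicit. Unset Printing Implicit Defensive.
Import Order.TTheory GRing.Theory Num.Theory.
Import numFieldNormedType.Exports.
Local Open Scope classical_set_scope.
Local Open Scope ring_scope.

Definition dotv {R : realType} {d : nat} (u v : 'rV[R]_d) : R :=
  \sum_(k < d) u ord0 k * v ord0 k.
Definition enorm {R : realType} {d : nat} (u : 'rV[R]_d) : R :=
  Num.sqrt (dotv u u).

Definition convex_set {R : realType} {d : nat} (X : set 'rV[R]_d) : Prop :=
  forall x z, X x -> X z -> forall l : R, 0 <= l <= 1 ->
    X ((1 - l) *: x + l *: z).

Definition convex_fun_on {R : realType} {d : nat} (X : set 'rV[R]_d)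
  (f : 'rV[R]_d -> R) : Prop :=
  forall x z, X x -> X z -> forall l : R, 0 <= l <= 1 ->
    f ((1 - l) *: x + l *: z) <= (1 - l) * f x + l * f z.

Definition gradient_on {R : realType} {d : nat} (X : set 'rV[R]_d)
  (f : 'rV[R]_d -> R) (g : 'rV[R]_d -> 'rV[R]_d) : Prop :=
  forall x, X x -> differentiable f x /\ forall v, 'D_v f x = dotv (g x) v.

Definition assumption_A1 {R : realType} (n : nat) (A : nat -> 'M[R]_n) (zeta : R) : Prop :=
  0 < zeta /\
  forall t, (1 <= t)%N ->
    (forall i j, 0 <= A t i j) /\
    (forall i, 0 < A t i i) /\
    (forall i j, 0 < A t i j -> zeta < A t i j) /\
    (* (b) G_t strongly connected, with edge (j,i) iff [A_t]_ij > 0 *)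
    (forall i j, connect (fun a b : 'I_n => 0 < A t b a) i j) /\
    (forall i, \sum_j A t i j = 1) /\
    (forall j, \sum_i A t i j = 1).

Definition assumption_A2 {R : realType} {d : nat} (X : set 'rV[R]_d) (M : R) : Prop :=
  convex_set X /\ compact X /\
  forall x z, X x -> X z -> enorm (x - z) <= M.

(* The trajectory of Algorithm DOMFW: x t i = x_{i,t}, xs t k i = x_{i,t}^k,
   xh t k i = hat x_{i,t}^k, gb t k i = bar grad f_{i,t}^k,
   gh t k i = hat grad f_{i,t}^k, v t k i = v_{i,t}^k. *)
Definition DOMFW_run {R : realType} {n d : nat} (X : set 'rV[R]_d)
  (A : nat -> 'M[R]_n) (grad : nat -> 'I_n -> 'rV[R]_d -> 'rV[R]_d)
  (alpha : nat -> R) (K : nat -> nat)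
  (x : nat -> 'I_n -> 'rV[R]_d)
  (xs xh gb gh v : nat -> nat -> 'I_n -> 'rV[R]_d) : Prop :=
  (forall i, X (x 1%N i)) /\
  forall t, (1 <= t)%N ->
    (forall i, xs t 1%N i = x t i) /\
    (forall k i, (1 <= k <= K t)%N ->
       xh t k i = \sum_j A t i j *: xs t k j) /\
    (forall i, gb t 1%N i = grad t i (xh t 1%N i)) /\
    (forall k i, (2 <= k <= K t)%N ->
       gb t k i = gh t k.-1 i + grad t i (xh t k i) - grad t i (xh t k.-1 i)) /\
    (forall k i, (1 <= k <= K t)%N ->
       gh t k i = \sum_j A t i j *: gb t k j) /\
    (forall k i, (1 <= k <= K t)%N ->
       X (v t k i) /\ forall y, X y -> dotv (v t k i) (gh t k i) <= dotv y (gh t k i)) /\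
    (forall k i, (1 <= k <= K t)%N ->
       xs t k.+1 i = xh t k i + alpha t *: (v t k i - xh t k i)) /\
    (forall i, x t.+1 i = xs t (K t).+1 i).

Definition xavg {R : realType} {n d : nat} (x : nat -> 'I_n -> 'rV[R]_d) (t : nat) : 'rV[R]_d :=
  n%:R^-1 *: \sum_i x t i.

(* Main.v *)
Require Import Defs.
From HB Require Import structures.
From mathcomp Require Import all_boot all_order all_algebra.
From mathcomp Require Import all_classical all_reals all_analysis.
Import Order.TTheory GRing.Theory Num.Theory.
Import numFieldNormedType.Exports.
Local Open Scope classical_set_scope.
Local Open Scope ring_scope.
From mathcomp Require Import ring lra.
Set Implicit Arguments. Unset Strict Implicit.

Section Gen.
Variable R : realType.

Lemma dbl_prod (I : finType) (a b : I -> R) :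
  (\sum_i a i) * (\sum_j b j) = \sum_i \sum_j a i * b j.
Proof. rewrite mulr_suml; apply: eq_bigr => i _; by rewrite mulr_sumr. Qed.

Lemma cs (I : finType) (f g : I -> R) :
  (\sum_i f i * g i) ^+ 2 <= (\sum_i f i ^+ 2) * (\sum_i g i ^+ 2).
Proof.
have H : 0 <= \sum_i \sum_j (f i * g j - f j * g i) ^+ 2.
  by apply: sumr_ge0 => i _; apply: sumr_ge0 => j _; apply: sqr_ge0.
have Ex : \sum_i \sum_j f j ^+ 2 * g i ^+ 2 = \sum_i \sum_j f i ^+ 2 * g j ^+ 2.
  by rewrite exchange_big.
have E : \sum_i \sum_j (f i * g j - f j * g i) ^+ 2 =
   (\sum_i \sum_j f i ^+ 2 * g j ^+ 2) + (\sum_i \sum_j f j ^+ 2 * g i ^+ 2)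
   - 2 * \sum_i \sum_j (f i * g i) * (f j * g j).
  rewrite mulr_sumr -big_split -sumrB; apply: eq_bigr => i _.
  rewrite mulr_sumr -big_split -sumrB; apply: eq_bigr => j _.
  rewrite /=; ring.
rewrite E Ex -!dbl_prod in H; rewrite expr2.
lra.
Qed.

Lemma sq_le (a b : R) : 0 <= b -> a ^+ 2 <= b ^+ 2 -> a <= b.
Proof. move=> hb h; rewrite !expr2 in h; nra. Qed.

Definition nrm2 {I : finType} (f : I -> R) := Num.sqrt (\sum_i f i ^+ 2).

Lemma sumsq_ge0 (I : finType) (f : I -> R) : 0 <= \sum_i f i ^+ 2.
Proof. by apply: sumr_ge0 => i _; apply: sqr_ge0. Qed.

Lemma nrm2_ge0 (I : finType) (f : I -> R) : 0 <= nrm2 f.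
Proof. exact: sqrtr_ge0. Qed.

Lemma nrm2_sqr (I : finType) (f : I -> R) : nrm2 f ^+ 2 = \sum_i f i ^+ 2.
Proof. by rewrite /nrm2 sqr_sqrtr // sumsq_ge0. Qed.

Lemma nrm2_le (I : finType) (f : I -> R) c : 0 <= c -> \sum_i f i ^+ 2 <= c ^+ 2 -> nrm2 f <= c.
Proof. by move=> hc h; apply: sq_le => //; rewrite nrm2_sqr. Qed.

Lemma nrm2_triangle (I : finType) (f g : I -> R) :
  nrm2 (fun i => f i + g i) <= nrm2 f + nrm2 g.
Proof.
apply: nrm2_le; first by rewrite addr_ge0 ?nrm2_ge0.
have E : \sum_i (f i + g i) ^+ 2 = \sum_i f i ^+ 2 + \sum_i g i ^+ 2 + 2 * \sum_i f i * g i.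
  rewrite mulr_sumr -!big_split; apply: eq_bigr => i _ /=; ring.
have C : \sum_i f i * g i <= nrm2 f * nrm2 g.
  apply: sq_le; first by rewrite mulr_ge0 ?nrm2_ge0.
  by rewrite exprMn !nrm2_sqr cs.
rewrite E -!nrm2_sqr; have := nrm2_ge0 f; have := nrm2_ge0 g; nra.
Qed.

Lemma sum_shift (n : nat) (y : 'I_n -> R) c :
  \sum_i (y i - c) ^+ 2 = \sum_i y i ^+ 2 - 2 * c * \sum_i y i + n%:R * c ^+ 2.
Proof.
have -> : n%:R * c ^+ 2 = \sum_(i < n) c ^+ 2 by rewrite sumr_const card_ord mulr_natl.
rewrite mulr_sumr -sumrB -big_split; apply: eq_bigr => i _ /=; ring.
Qed.

Lemma sq_sum_le (u v m P Q z : R) : 0 < z -> 0 <= m -> 0 <= Q ->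
  z * u ^+ 2 <= P -> z * v ^+ 2 <= m * Q -> z * (u + v) ^+ 2 <= (m + 1) * (P + Q).
Proof.
move=> hz hm hQ hu hv; rewrite !expr2 in hu hv *.
have [m0|mp] := eqVneq m 0.
  rewrite m0 mul0r in hv; have hv2 : v * v <= 0 by nra.
  have : v ^+ 2 == 0 by rewrite eq_le sqr_ge0 andbT expr2.
  rewrite expf_eq0 /= => /eqP v0.
  rewrite v0 m0; nra.
have mp' : 0 < m by rewrite lt_def mp hm.
have h1 : 0 <= z * ((m * u - v) * (m * u - v)) by apply: mulr_ge0; [exact: ltW | rewrite -expr2; exact: sqr_ge0].
have key : 0 <= m * u * u * z + Q - 2 * z * u * v.
  have : 0 <= m * (m * u * u * z + Q - 2 * z * u * v) by nra.
  by rewrite pmulr_rge0.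
have h2 : (m + 1) * (z * u * u) <= (m + 1) * P by rewrite ler_wpM2l //; lra.
nra.
Qed.


Lemma var_id (I : finType) (a z : I -> R) m : \sum_j a j * (z j - m) ^+ 2 =
  \sum_j a j * z j ^+ 2 - 2 * m * (\sum_j a j * z j) + m ^+ 2 * \sum_j a j.
Proof. rewrite !mulr_sumr -sumrB -big_split; apply: eq_bigr => j _ /=; ring. Qed.

Lemma contract n (A : 'M[R]_n) (zeta : R) (y : 'I_n -> R) :
  (0 < n)%N -> 0 < zeta ->
  (forall i j, 0 <= A i j) -> (forall i, 0 < A i i) ->
  (forall i j, 0 < A i j -> zeta < A i j) ->
  (forall i j, connect (fun a b : 'I_n => 0 < A b a) i j) ->
  (forall i, \sum_j A i j = 1) -> (forall j, \sum_i A i j = 1) ->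
  \sum_i y i = 0 ->
  \sum_i (\sum_j A i j * y j) ^+ 2 <= (1 - zeta / (2 * n%:R ^+ 2)) * \sum_i y i ^+ 2.
Proof.
move=> hn hz hA hdiag hpos hconn hrow hcol hy0.
pose mu i := \sum_j A i j * y j.
pose q i := \sum_j A i j * (y j - mu i) ^+ 2.
have qE : forall i, q i = \sum_j A i j * y j ^+ 2 - mu i ^+ 2.
  move=> i; rewrite /q.
  rewrite var_id.
  rewrite hrow /mu; ring.
have qge0 : forall i, 0 <= q i.
  by move=> i; apply: sumr_ge0 => j _; rewrite mulr_ge0 ?sqr_ge0.
have Qsum : \sum_i q i = \sum_i y i ^+ 2 - \sum_i mu i ^+ 2.
  rewrite (eq_bigr _ (fun i _ => qE i)) sumrB; congr (_ - _).
  rewrite exchange_big; apply: eq_bigr => j _ /=; by rewrite -mulr_suml hcol mul1r.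
have edge : forall a b, 0 < A b a -> zeta * (y b - y a) ^+ 2 <= 2 * q b.
  move=> a b hab; have [->|nab] := eqVneq a b.
    by rewrite subrr expr0n /= mulr0 mulr_ge0.
  rewrite /q (bigD1 a) //= (bigD1 b) /=; last by rewrite eq_sym nab.
  have hr : 0 <= \sum_(i | (i != a) && (i != b)) A b i * (y i - mu b) ^+ 2.
    by apply: sumr_ge0 => j _; rewrite mulr_ge0 ?sqr_ge0.
  have h1 : zeta * (y a - mu b) ^+ 2 <= A b a * (y a - mu b) ^+ 2.
    by rewrite ler_wpM2r ?sqr_ge0 // ltW // hpos.
  have h2 : zeta * (y b - mu b) ^+ 2 <= A b b * (y b - mu b) ^+ 2.
    by rewrite ler_wpM2r ?sqr_ge0 // ltW // hpos.
  have h3 : (y b - y a) ^+ 2 <= 2 * ((y a - mu b) ^+ 2 + (y b - mu b) ^+ 2).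
    have := sqr_ge0 (y a - mu b + (y b - mu b)); rewrite !expr2 => ?; nra.
  have h4 := ler_wpM2l (ltW hz) h3.
  lra.
have pathL : forall (p : seq 'I_n) (i0 : 'I_n), path (fun a b : 'I_n => 0 < A b a) i0 p ->
    zeta * (y (last i0 p) - y i0) ^+ 2 <= (size p)%:R * (2 * \sum_(b <- p) q b).
  elim => [|b p IH] i0 /=.
    by move=> _; rewrite subrr expr0n /= mulr0 mul0r.
  move/andP => [hb hp].
  have h1 := IH b hp; have h2 := edge i0 b hb.
  have := sq_sum_le (u := y b - y i0) (v := y (last b p) - y b) (m := (size p)%:R) hz (ler0n _ _)
     _ h2 h1.
  rewrite big_cons.
  have -> : y b - y i0 + (y (last b p) - y b) = y (last b p) - y i0 by ring.
  move=> H.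
  have W0 : 0 <= 2 * \sum_(j <- p) q j by rewrite mulr_ge0 // big_seq sumr_ge0.
  apply: (le_trans (H W0)).
  by rewrite -[(size p).+1%:R]natr1 -!mulrDr.
pose i0 : 'I_n := Ordinal hn.
have Qge0 : 0 <= \sum_i q i by apply: sumr_ge0 => i _; exact: qge0.
have pt : forall i, zeta * (y i - y i0) ^+ 2 <= n%:R * (2 * \sum_i q i).
  move=> i; case/connectP: (hconn i0 i) => p hp ->.
  case: (shortenP hp) => p' hp' hu _.
  apply: (le_trans (pathL p' i0 hp')).
  have hs : (size p' <= n)%N.
    move: (hu) => /card_uniqP hc; have := max_card (mem (i0 :: p')).
    by rewrite hc card_ord /= => h; exact: ltnW.
  have hsum : \sum_(b <- p') q b <= \sum_b q b.
    rewrite big_uniq; last by case/andP: hu.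
    rewrite [X in _ <= X](bigID (fun b => b \in p')) /= lerDl sumr_ge0 //.
  apply: ler_pM; rewrite ?ler0n ?ler_nat //.
    by rewrite mulr_ge0 // big_seq sumr_ge0.
  by rewrite ler_wpM2l.
have S1 : zeta * \sum_i (y i - y i0) ^+ 2 <= n%:R * (n%:R * (2 * \sum_i q i)).
  rewrite mulr_sumr; apply: (le_trans (ler_sum _ (fun i _ => pt i))).
  by rewrite sumr_const card_ord -[X in X <= _]mulr_natl.
have S2 : \sum_i y i ^+ 2 <= \sum_i (y i - y i0) ^+ 2.
  by rewrite sum_shift hy0 mulr0 subr0 lerDl mulr_ge0 ?sqr_ge0.
have -> : \sum_i (\sum_j A i j * y j) ^+ 2 = \sum_i y i ^+ 2 - \sum_i q i.
  by rewrite Qsum /mu; ring.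
have hN : 0 < n%:R :> R by rewrite ltr0n.
have S3 : zeta * \sum_i y i ^+ 2 <= (\sum_i q i) * (2 * n%:R ^+ 2).
  apply: (le_trans (ler_wpM2l (ltW hz) S2)); apply: (le_trans S1).
  rewrite le_eqVlt; apply/orP; left; apply/eqP; rewrite expr2.
  ring.
rewrite mulrBl mul1r lerD2l lerN2 mulrAC ler_pdivrMr //.
by rewrite mulr_gt0 // exprn_gt0.
Qed.


Definition N2 {n d : nat} (F : 'I_n -> 'I_d -> R) := nrm2 (fun p : 'I_n * 'I_d => F p.1 p.2).

Lemma N2_ge0 n d (F : 'I_n -> 'I_d -> R) : 0 <= N2 F.
Proof. exact: nrm2_ge0. Qed.

Lemma N2_sqr n d (F : 'I_n -> 'I_d -> R) : N2 F ^+ 2 = \sum_i \sum_k F i k ^+ 2.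
Proof. by rewrite /N2 nrm2_sqr (pair_bigA _ (fun i k => F i k ^+ 2)). Qed.

Lemma N2_le n d (F : 'I_n -> 'I_d -> R) c : 0 <= c -> \sum_i \sum_k F i k ^+ 2 <= c ^+ 2 -> N2 F <= c.
Proof. by move=> hc h; apply: sq_le => //; rewrite N2_sqr. Qed.

Lemma N2_ext n d (F G : 'I_n -> 'I_d -> R) : (forall i k, F i k = G i k) -> N2 F = N2 G.
Proof. by move=> h; rewrite /N2 /nrm2; congr Num.sqrt; apply: eq_bigr => p _; rewrite h. Qed.

Lemma N2_triangle n d (F G : 'I_n -> 'I_d -> R) :
  N2 (fun i k => F i k + G i k) <= N2 F + N2 G.
Proof. exact: (nrm2_triangle (fun p : 'I_n * 'I_d => F p.1 p.2) (fun p => G p.1 p.2)). Qed.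

Lemma enorm_sqr d (u : 'rV[R]_d) : enorm u ^+ 2 = \sum_k u ord0 k ^+ 2.
Proof.
rewrite /enorm sqr_sqrtr; first by rewrite /dotv; apply: eq_bigr => k _; rewrite expr2.
by rewrite /dotv; apply: sumr_ge0 => k _; rewrite -expr2 sqr_ge0.
Qed.

Lemma enorm_ge0 d (u : 'rV[R]_d) : 0 <= enorm u.
Proof. exact: sqrtr_ge0. Qed.

Definition Fn {n d : nat} (Y : 'I_n -> 'rV[R]_d) := N2 (fun i k => Y i ord0 k).

Lemma enorm_le_Fn n d (Y : 'I_n -> 'rV[R]_d) i : enorm (Y i) <= Fn Y.
Proof.
apply: sq_le; first exact: N2_ge0.
rewrite /Fn N2_sqr enorm_sqr (bigD1 i) //= lerDl.
by apply: sumr_ge0 => j _; apply: sumsq_ge0.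
Qed.

Definition avg {n d : nat} (Y : 'I_n -> 'rV[R]_d) : 'rV[R]_d := n%:R^-1 *: \sum_i Y i.

Lemma avgE n d (Y : 'I_n -> 'rV[R]_d) k : avg Y ord0 k = n%:R^-1 * \sum_i Y i ord0 k.
Proof. by rewrite /avg mxE summxE. Qed.

Lemma mixE n d (a : 'I_n -> R) (Y : 'I_n -> 'rV[R]_d) k :
  (\sum_j a j *: Y j) ord0 k = \sum_j a j * Y j ord0 k.
Proof. by rewrite summxE; apply: eq_bigr => j _; rewrite mxE. Qed.

Lemma dev_sum0 n (y : 'I_n -> R) : (0 < n)%N -> \sum_i (y i - n%:R^-1 * \sum_j y j) = 0.
Proof.
move=> hn; rewrite sumrB sumr_const card_ord -[(_ * _) *+ n]mulr_natl mulrA mulfV ?mul1r ?subrr //.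
by rewrite pnatr_eq0 -lt0n.
Qed.

Lemma dev_sq_le n (y : 'I_n -> R) : (0 < n)%N ->
  \sum_i (y i - n%:R^-1 * \sum_j y j) ^+ 2 <= \sum_i y i ^+ 2.
Proof.
move=> hn; rewrite sum_shift.
have hN : n%:R != 0 :> R by rewrite pnatr_eq0 -lt0n.
set s := \sum_j y j; set c := n%:R^-1 * s.
have hs : s = n%:R * c by rewrite /c mulrA mulfV // mul1r.
rewrite hs; have : 0 <= n%:R * c ^+ 2 by rewrite mulr_ge0 ?sqr_ge0.
rewrite !expr2; nra.
Qed.


Lemma conv_seq d (X : set 'rV[R]_d) (I : eqType) (s : seq I) (a : I -> R) (z : I -> 'rV[R]_d) :
  Defs.convex_set X -> (forall i, 0 <= a i) -> (forall i, X (z i)) ->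
  \sum_(i <- s) a i = 1 -> X (\sum_(i <- s) a i *: z i).
Proof.
move=> hX ha hz; elim: s a ha => [|b s IH] a ha.
  by rewrite big_nil => /eqP; rewrite eq_sym oner_eq0.
rewrite !big_cons => hs.
set S := \sum_(i <- s) a i in hs.
have S0 : 0 <= S by apply: sumr_ge0.
have [Sz|Snz] := eqVneq S 0.
  have hzero : \sum_(i <- s) a i *: z i = 0.
    apply: big1_seq => i /andP[_ hi].
    have : all (fun i => true ==> (a i == 0)) s by rewrite -psumr_eq0 //; apply/eqP.
    by move/allP => /(_ i hi) /= /eqP ->; rewrite scale0r.
  rewrite hzero addr0; have -> : a b = 1 by rewrite -hs Sz addr0.
  by rewrite scale1r; exact: hz.
have Sp : 0 < S by rewrite lt_def Snz S0.
have hinner : X (\sum_(i <- s) (a i / S) *: z i).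
  apply: IH => [i|]; first by rewrite divr_ge0 // ltW.
  by rewrite -mulr_suml mulfV.
have -> : \sum_(i <- s) a i *: z i = S *: \sum_(i <- s) (a i / S) *: z i.
  rewrite scaler_sumr; apply: eq_bigr => i _; rewrite scalerA mulrC divfK //.
have -> : a b = 1 - S by rewrite -hs addrK.
apply: (hX (z b) _ (hz b) hinner S).
by rewrite S0 /= -hs lerDr.
Qed.


Lemma step n d (X : set 'rV[R]_d) (M : R) (A : 'M[R]_n) (zeta sig alpha : R)
  (Y V : 'I_n -> 'rV[R]_d) :
  (0 < n)%N -> 0 < zeta ->
  (forall i j, 0 <= A i j) -> (forall i, 0 < A i i) ->
  (forall i j, 0 < A i j -> zeta < A i j) ->
  (forall i j, connect (fun a b : 'I_n => 0 < A b a) i j) ->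
  (forall i, \sum_j A i j = 1) -> (forall j, \sum_i A i j = 1) ->
  0 <= sig -> 1 - zeta / (2 * n%:R ^+ 2) <= sig ^+ 2 ->
  0 <= alpha -> 0 <= M ->
  (forall x z, X x -> X z -> enorm (x - z) <= M) ->
  (forall i, X (\sum_j A i j *: Y j)) -> (forall i, X (V i)) ->
  Fn (fun i => ((\sum_j A i j *: Y j) + alpha *: (V i - \sum_j A i j *: Y j))
               - avg (fun i => (\sum_j A i j *: Y j) + alpha *: (V i - \sum_j A i j *: Y j)))
  <= sig * Fn (fun i => Y i - avg Y) + alpha * (n%:R * M).
Proof.
move=> hn hz hA hdiag hpos hconn hrow hcol hsig0 hsig halpha hM0 hM hXH hV.
set Z := fun i => (\sum_j A i j *: Y j) + alpha *: (V i - \sum_j A i j *: Y j).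
pose y : 'I_n -> 'I_d -> R := fun i k => Y i ord0 k.
pose ybar k := n%:R^-1 * \sum_i y i k.
pose h i k := \sum_j A i j * y j k.
pose w i k := V i ord0 k - h i k.
pose wbar k := n%:R^-1 * \sum_i w i k.
have Zk : forall i k, Z i ord0 k = h i k + alpha * w i k.
  by move=> i k; rewrite /Z !mxE mixE.
have sumh : forall k, \sum_i h i k = \sum_j y j k.
  move=> k; rewrite /h exchange_big; apply: eq_bigr => j _ /=.
  by rewrite -mulr_suml hcol mul1r.
have hdev : forall i k, \sum_j A i j * (y j k - ybar k) = h i k - ybar k.
  move=> i k; rewrite /h (eq_bigr (fun j => A i j * y j k - A i j * ybar k)); last first.
    by move=> j _; rewrite mulrBr.
  by rewrite sumrB -mulr_suml hrow mul1r.
have eqZ : Fn (fun i => Z i - avg Z) =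
    N2 (fun i k => (\sum_j A i j * (y j k - ybar k)) + alpha * (w i k - wbar k)).
  rewrite /Fn; apply: N2_ext => i k.
  rewrite mxE [X in _ + X]mxE.
  rewrite (avgE Z) Zk hdev (eq_bigr _ (fun i _ => Zk i k)) big_split /= -mulr_sumr sumh.
  rewrite /ybar /wbar; ring.
have eqY : Fn (fun i => Y i - avg Y) = N2 (fun i k => y i k - ybar k).
  by rewrite /Fn; apply: N2_ext => i k; rewrite mxE [X in _ + X]mxE (avgE Y).
rewrite eqZ eqY; apply: (le_trans (N2_triangle _ _)); apply: lerD.
  apply: N2_le; first by rewrite mulr_ge0 // N2_ge0.
  rewrite exprMn N2_sqr exchange_big [X in _ <= _ * X]exchange_big mulr_sumr /=.
  apply: ler_sum => k _.
  have := @contract n A zeta (fun j => y j k - ybar k) hn hz hA hdiag hpos hconn hrow hcol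
    (dev_sum0 _ hn).
  move=> H; apply: (le_trans H); apply: ler_wpM2r => //; exact: sumsq_ge0.
apply: N2_le; first by rewrite !mulr_ge0 // ler0n.
have -> : \sum_i \sum_k (alpha * (w i k - wbar k)) ^+ 2 =
    alpha ^+ 2 * \sum_k \sum_i (w i k - wbar k) ^+ 2.
  rewrite exchange_big mulr_sumr; apply: eq_bigr => k _; rewrite mulr_sumr.
  by apply: eq_bigr => i _; rewrite exprMn.
have H1 : \sum_k \sum_i (w i k - wbar k) ^+ 2 <= \sum_i \sum_k w i k ^+ 2.
  rewrite [X in _ <= X]exchange_big; apply: ler_sum => k _; exact: dev_sq_le.
have H2 : \sum_i \sum_k w i k ^+ 2 <= n%:R * M ^+ 2.
  have -> : n%:R * M ^+ 2 = \sum_(i < n) M ^+ 2 by rewrite sumr_const card_ord mulr_natl.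
  apply: ler_sum => i _.
  have -> : \sum_k w i k ^+ 2 = enorm (V i - \sum_j A i j *: Y j) ^+ 2.
    by rewrite enorm_sqr; apply: eq_bigr => k _; rewrite mxE [X in _ + X]mxE mixE.
  have := hM _ _ (hV i) (hXH i); have := enorm_ge0 (V i - \sum_j A i j *: Y j).
  move=> e1 e2; rewrite !expr2; exact (ler_pM e1 e1 e2 e2).
have H3 : n%:R * M ^+ 2 <= (n%:R * M) ^+ 2.
  rewrite exprMn expr2 -mulrA ler_peMl ?mulr_ge0 ?sqr_ge0 //.
  by rewrite ler1n.
rewrite exprMn; apply: ler_wpM2l; first exact: sqr_ge0.
exact: (le_trans H1 (le_trans H2 H3)).
Qed.


Lemma mono_sum (F : nat -> R) T : (forall t, (1 <= t)%N -> 0 <= F t) ->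
  \sum_(1 <= t < T) F t <= \sum_(1 <= t < T.+1) F t.
Proof.
move=> hF; case: T => [|T]; first by rewrite !big_geq.
by rewrite (big_nat_recr T.+1) //= lerDl hF.
Qed.

Lemma sum_rec (E c : nat -> R) (rho : R) T : 0 <= rho ->
  (forall t, (1 <= t)%N -> 0 <= E t) -> (forall t, (1 <= t)%N -> 0 <= c t) ->
  (forall t, (1 <= t)%N -> E t.+1 <= rho * E t + c t) ->
  (1 - rho) * \sum_(1 <= t < T.+1) E t <= E 1%N + \sum_(1 <= t < T.+1) c t.
Proof.
move=> hr hE hc hrec.
have key : forall T, \sum_(1 <= t < T.+1) E t <=
    E 1%N + rho * \sum_(1 <= t < T) E t + \sum_(1 <= t < T) c t.
  elim => [|T' IH]; first by rewrite !big_geq // mulr0 !addr0 hE.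
  rewrite (big_nat_recr T'.+1) //=.
  case: T' IH => [|T'] IH.
    by rewrite !big_geq // mulr0 !addr0 add0r.
  rewrite !(big_nat_recr T'.+1) //= in IH *.
  have := hrec T'.+1 (ltn0Sn _); lra.
have h1 := key T.
have h2 := mono_sum T hE; have h3 := mono_sum T hc.
have h4 := ler_wpM2l hr h2.
lra.
Qed.

Lemma sumsq_le_sqsum (I : finType) (a : I -> R) : (forall i, 0 <= a i) ->
  \sum_i a i ^+ 2 <= (\sum_i a i) ^+ 2.
Proof.
move=> ha; rewrite [X in _ <= X]expr2 mulr_suml; apply: ler_sum => i _.
rewrite expr2 ler_wpM2l // (bigD1 i) //= lerDl; exact: sumr_ge0.
Qed.

Lemma final_ineq (N M S E1 S1 D1 Al s rho : R) :
  0 < s -> s < 1 -> 0 <= rho -> rho < 1 -> 1 <= N -> 0 <= M -> 0 <= Al ->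
  0 <= E1 -> E1 <= S1 -> 0 <= D1 ->
  (1 - rho) * S <= E1 + N * M / (1 - s) * Al ->
  N * S <= N * s^-1 / (1 - rho) * S1 + D1
     + (N ^+ 2 * M * s^-1 / (s * (1 - s) * (1 - rho)) + 2 * N * M) * Al.
Proof.
move=> s0 s1 r0 r1 N1 M0 A0 E0 ES D0 h.
have u0 : 0 < 1 - rho by rewrite subr_gt0.
have w0 : 0 < 1 - s by rewrite subr_gt0.
have N0 : 0 <= N by apply: le_trans N1.
have hS : S <= (E1 + N * M / (1 - s) * Al) / (1 - rho) by rewrite ler_pdivlMr // mulrC.
have t1 : N * S <= N * E1 / (1 - rho) + N * (N * M / (1 - s) * Al) / (1 - rho).
  have := ler_wpM2l N0 hS; move=> H; apply: (le_trans H).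
  by rewrite le_eqVlt; apply/orP; left; apply/eqP; ring.
have is1 : 1 <= s^-1 by rewrite invr_ge1 // ?ltW // unitfE gt_eqF.
have t2 : N * E1 / (1 - rho) <= N * s^-1 / (1 - rho) * S1.
  have -> : N * E1 / (1 - rho) = (N / (1 - rho)) * E1 by ring.
  have -> : N * s^-1 / (1 - rho) * S1 = (N / (1 - rho)) * (s^-1 * S1) by ring.
  apply: ler_wpM2l; first by rewrite divr_ge0 // ltW.
  apply: (le_trans ES); rewrite ler_peMl //; exact: le_trans E0 ES.
have t3 : N * (N * M / (1 - s) * Al) / (1 - rho) <= N ^+ 2 * M * s^-1 / (s * (1 - s) * (1 - rho)) * Al.
  set K0 := N * (N * M / (1 - s) * Al) / (1 - rho).
  have K00 : 0 <= K0.
    rewrite /K0; apply: divr_ge0; last exact: ltW.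
    apply: mulr_ge0 => //; apply: mulr_ge0 => //; apply: divr_ge0; [exact: mulr_ge0 | exact: ltW].
  have -> : N ^+ 2 * M * s^-1 / (s * (1 - s) * (1 - rho)) * Al = K0 * (s^-1 * s^-1).
    rewrite /K0; field; rewrite ?gt_eqF //.
  rewrite ler_peMr //; rewrite -[1]mulr1; apply: ler_pM => //.
have hNM : 0 <= 2 * N * M * Al by rewrite !mulr_ge0.
rewrite mulrDl; lra.
Qed.

End Gen.

Unset Implicit Arguments. Set Strict Implicit.

Theorem lemma1 (R : realType) (n d : nat) (X : set 'rV[R]_d) (M zeta : R)
  (A : nat -> 'M[R]_n)
  (f : nat -> 'I_n -> 'rV[R]_d -> R) (grad : nat -> 'I_n -> 'rV[R]_d -> 'rV[R]_d)
  (alpha : nat -> R) (K : nat -> nat)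
  (x : nat -> 'I_n -> 'rV[R]_d) (xs xh gb gh v : nat -> nat -> 'I_n -> 'rV[R]_d)
  (T : nat) :
  (0 < n)%N ->
  assumption_A1 A zeta ->
  assumption_A2 X M ->
  (forall t i, (1 <= t)%N -> convex_fun_on X (f t i) /\ gradient_on X (f t i) (grad t i)) ->
  (forall t, (1 <= t)%N -> 0 < alpha t <= 1) ->
  (forall t s, (1 <= t <= s)%N -> (K t <= K s)%N) ->
  (forall t, (1 <= t)%N -> (2 <= K t)%N) ->
  DOMFW_run X A grad alpha K x xs xh gb gh v ->
  (2 <= T)%N ->
  let sigma1 := 1 - zeta / (4 * n%:R ^+ 2) in
  let Gamma1 := sigma1^-1 in
  \sum_(1 <= t < T.+1) \sum_i enorm (x t i - xavg x t)
  <= n%:R * Gamma1 / (1 - sigma1 ^+ K 1%N) * \sum_i enorm (x 1%N i)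
     + \sum_i enorm (x 1%N i - xavg x 1%N)
     + (n%:R ^+ 2 * M * Gamma1 / (sigma1 * (1 - sigma1) * (1 - sigma1 ^+ K 1%N))
        + 2 * n%:R * M) * \sum_(1 <= t < T.+1) alpha t.
Proof.
move=> hn [hz HA] [hXc [_ hXM]] _ halpha hK hK2 [hx1 Hrun] hT.
cbv zeta; set sigma1 := 1 - zeta / (4 * n%:R ^+ 2).
pose i0 : 'I_n := Ordinal hn.
have [hA0 [hdiag [hpos [hconn [hrow hcol]]]]] := HA 1%N (leqnn 1).
have z1 : zeta < 1.
  apply: (lt_le_trans (hpos _ _ (hdiag i0))).
  by rewrite -(hrow i0) (bigD1 i0) //= lerDl sumr_ge0.
have hM0 : 0 <= M.
  exact: le_trans (enorm_ge0 (x 1%N i0 - x 1%N i0)) (hXM _ _ (hx1 i0) (hx1 i0)).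
have N1 : 1 <= n%:R :> R by rewrite ler1n.
have q0 : 0 < zeta / (4 * n%:R ^+ 2).
  by rewrite divr_gt0 // mulr_gt0 // exprn_gt0 // (lt_le_trans ltr01 N1).
have q1 : zeta / (4 * n%:R ^+ 2) < 1.
  rewrite ltr_pdivrMr ?mul1r; last by rewrite mulr_gt0 // exprn_gt0 // (lt_le_trans ltr01 N1).
  have : 1 <= n%:R ^+ 2 :> R by rewrite expr2; have := N1; nra.
  lra.
have s0 : 0 < sigma1 by rewrite /sigma1 subr_gt0.
have s1 : sigma1 < 1 by rewrite /sigma1 ltrBlDr ltrDl.
have hsig2 : 1 - zeta / (2 * n%:R ^+ 2) <= sigma1 ^+ 2.
  have -> : zeta / (2 * n%:R ^+ 2) = 2 * (zeta / (4 * n%:R ^+ 2)).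
    field; rewrite ?pnatr_eq0 -?lt0n //; by rewrite expf_neq0 // pnatr_eq0 -lt0n.
  rewrite /sigma1; set q := zeta / (4 * n%:R ^+ 2).
  have := sqr_ge0 q; rewrite !expr2; lra.
pose E t := Fn (fun i => x t i - avg (x t)).
have w0 : 0 < 1 - sigma1 by rewrite subr_gt0.
have round : forall t, (1 <= t)%N -> (forall i, X (x t i)) ->
    (forall i, X (x t.+1 i)) /\
    E t.+1 <= sigma1 ^+ K t * E t + alpha t * (n%:R * M) / (1 - sigma1).
  move=> t ht hxt.
  have [hA0' [hdiag' [hpos' [hconn' [hrow' hcol']]]]] := HA t ht.
  have [hs1 [hxh [_ [_ [_ [hv [hxs hnext]]]]]]] := Hrun t ht.
  set c := alpha t * (n%:R * M) / (1 - sigma1).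
  have hat := halpha t ht; move/andP: hat => [a0 a1].
  have c0 : 0 <= c.
    rewrite /c; apply: divr_ge0; last exact: ltW.
    by apply: mulr_ge0; [exact: ltW | exact: mulr_ge0 (ler0n _ _) hM0].
  have hc : alpha t * (n%:R * M) = c * (1 - sigma1) by rewrite /c divfK // gt_eqF.
  have inner : forall m, (m <= K t)%N -> (forall i, X (xs t m.+1 i)) /\
      Fn (fun i => xs t m.+1 i - avg (xs t m.+1)) <= c + sigma1 ^+ m * E t.
    elim => [|m IH] hm.
      have e : xs t 1%N = x t by apply: funext => i; rewrite hs1.
      split; first by move=> i; rewrite e.
      by rewrite e expr0 mul1r lerDr.
    have hk : (1 <= m.+1 <= K t)%N by rewrite ltn0Sn hm.
    have [hXY hF] := IH (ltnW hm).
    have hXH : forall i, X (\sum_j A t i j *: xs t m.+1 j).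
      move=> i; apply: conv_seq => //.
    have hV : forall i, X (v t m.+1 i) := fun i => (hv m.+1 i hk).1.
    have exs : xs t m.+2 = fun i => (\sum_j A t i j *: xs t m.+1 j)
        + alpha t *: (v t m.+1 i - \sum_j A t i j *: xs t m.+1 j).
      by apply: funext => i; rewrite hxs // hxh.
    split.
      move=> i; rewrite exs /=.
      have -> : forall (a : R) (p q : 'rV[R]_d), p + a *: (q - p) = (1 - a) *: p + a *: q.
        by move=> a p q; rewrite scalerBr scalerBl scale1r addrA addrAC.
      by apply: hXc => //; rewrite ltW.
    have := step (X := X) (M := M) (A := A t) (zeta := zeta) (sig := sigma1) (alpha := alpha t)
      (Y := xs t m.+1) (V := v t m.+1) hn hz hA0' hdiag' hpos' hconn' hrow' hcol'
      (ltW s0) hsig2 (ltW a0) hM0 hXM hXH hV.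
    move=> H; rewrite exs; apply: (le_trans H).
    have := ler_wpM2l (ltW s0) hF; rewrite hc exprS; lra.
  have [hX hF] := inner (K t) (leqnn _).
  have e : x t.+1 = xs t (K t).+1 by apply: funext => i; rewrite hnext.
  split; first by move=> i; rewrite e.
  by rewrite /E e addrC.
have Xall : forall t, (1 <= t)%N -> forall i, X (x t i).
  elim => [//|t IH] ht.
  case: t IH ht => [|t] IH ht; first exact: hx1.
  exact: (round t.+1 (ltn0Sn _) (IH (ltn0Sn _))).1.
have E0 : forall t, (1 <= t)%N -> 0 <= E t by move=> t _; exact: N2_ge0.
have rho0 : 0 <= sigma1 ^+ K 1%N by rewrite exprn_ge0 // ltW.
have rho1 : sigma1 ^+ K 1%N < 1 by rewrite exprn_ilt1 ?ltW // -lt0n (leq_trans _ (hK2 1%N (leqnn 1))).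
have rec : forall t, (1 <= t)%N -> E t.+1 <= sigma1 ^+ K 1%N * E t + alpha t * (n%:R * M) / (1 - sigma1).
  move=> t ht; have [_ H] := round t ht (Xall t ht).
  apply: (le_trans H); rewrite lerD2r; apply: ler_wpM2r; first exact: E0.
  by apply: ler_wiXn2l; rewrite ?ltW //; apply: hK; rewrite leqnn ht.
have hsum := sum_rec T rho0 E0 (c := fun t => alpha t * (n%:R * M) / (1 - sigma1)) _ rec.
have hsum' : (1 - sigma1 ^+ K 1%N) * \sum_(1 <= t < T.+1) E t <=
    E 1%N + n%:R * M / (1 - sigma1) * \sum_(1 <= t < T.+1) alpha t.
  have -> : n%:R * M / (1 - sigma1) * \sum_(1 <= t < T.+1) alpha t =
      \sum_(1 <= t < T.+1) alpha t * (n%:R * M) / (1 - sigma1).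
    by rewrite mulr_sumr; apply: eq_bigr => t _; ring.
  apply: hsum => t ht; have := halpha t ht; move/andP => [a0 _].
  apply: divr_ge0; last exact: ltW.
  by apply: mulr_ge0; [exact: ltW | exact: mulr_ge0 (ler0n _ _) hM0].
have LB : \sum_(1 <= t < T.+1) \sum_i enorm (x t i - xavg x t) <=
    n%:R * \sum_(1 <= t < T.+1) E t.
  rewrite mulr_sumr; apply: ler_sum => t _.
  have -> : n%:R * E t = \sum_(i < n) E t by rewrite sumr_const card_ord mulr_natl.
  apply: ler_sum => i _; exact: (enorm_le_Fn (fun i => x t i - avg (x t)) i).
have E1S : E 1%N <= \sum_i enorm (x 1%N i).
  apply: N2_le; first by apply: sumr_ge0 => i _; exact: enorm_ge0.
  apply: le_trans (sumsq_le_sqsum (fun i => enorm_ge0 (x 1%N i)))%R.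
  rewrite exchange_big /=.
  have -> : \sum_i enorm (x 1%N i) ^+ 2 = \sum_k \sum_i (x 1%N i ord0 k) ^+ 2.
    by rewrite exchange_big; apply: eq_bigr => i _; rewrite enorm_sqr.
  apply: ler_sum => k _.
  have := dev_sq_le (fun i => x 1%N i ord0 k) hn.
  by under eq_bigr => i _ do rewrite mxE [X in _ + X]mxE (avgE (x 1%N)).
apply: (le_trans LB).
apply: (final_ineq (E1 := E 1%N) (S := \sum_(1 <= t < T.+1) E t)) => //.
- rewrite big_nat_cond; apply: sumr_ge0 => t /andP[/andP[ht _] _].
  by have /andP[a0 _] := halpha t ht; exact: ltW.
- exact: E0.
- by apply: sumr_ge0 => i _; exact: enorm_ge0.
Qed.
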